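(* Let $A_{\mathbb{Z}}$ and $d_{\mathbb{Z}}:A_{\mathbb{Z}}\to\mathbb{Z}$ be as in the context, let $\lambda$ be the measure on $[0,1)\times A_{\mathbb{Z}}$ given by $\int f\,d\lambda=\int_0^1\sum_{\omega\in A_{\mathbb{Z}}}f(x,\omega)\,dx$, and define $\mathcal E:L^2(\mathbb{R})\to L^2([0,1)\times A_{\mathbb{Z}},\lambda)$ by $\mathcal Ef(x,\omega)=f(x+d_{\mathbb{Z}}(\omega))$. Then $\mathcal E$ is a unitary isomorphism and it intertwines the representations: $\mathcal E\hat T=\tilde T\mathcal E$ and $\mathcal E\hat U=\tilde U\mathcal E$, where on $L^2(\mathbb{R})$, $\hat Tf(\xi)=e^{2\pi i\xi}f(\xi)$, $\hat Uf(\xi)=\sqrt2 f(2\xi)$, and on $L^2([0,1)\times A_{\mathbb{Z}},\lambda)$, $\tilde Tf(x,\omega)=e^{2\pi ix}f(x,\omega)$, $\tilde Uf(x,\omega)=\sqrt2 f(\tilde r(x,\omega))$.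
   Context: Words: $\underline0=000\cdots$, $\underline1=111\cdots$; $A_0=\{\omega_1\cdots\omega_n\underline0\}$, $A_1=\{\omega_1\cdots\omega_n\underline1\}$ ($n\ge0$, $\omega_i\in\{0,1\}$), $A_{\mathbb{Z}}=A_0\cup A_1$. $d_{\mathbb{Z}}(\omega_1\cdots\omega_n\underline0)=\sum_{k=1}^n\omega_k2^{k-1}$ and $d_{\mathbb{Z}}(\omega_1\cdots\omega_n\underline1)=\sum_{k=1}^n\omega_k2^{k-1}-2^n$ (a bijection $A_{\mathbb{Z}}\to\mathbb{Z}$). On $[0,1)$: $r(x)=2x\bmod1$, $\tau_0(x)=x/2$, $\tau_1(x)=(x+1)/2$, and $\omega_x\in\{0,1\}$ is the digit with $\tau_{\omega_x}(r(x))=x$. $\tilde r(x,\omega_1\omega_2\cdots)=(r(x),\omega_x\omega_1\omega_2\cdots)$. *)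

(* Defs.v *)
From HB Require Import structures.
From mathcomp Require Import all_boot all_order all_algebra.
From mathcomp Require Import all_classical all_reals all_analysis.
From mathcomp Require Import complex.
Set Implicit Arguments. Unset Strict Implicit. Unset Printing Implicit Defensive.
Import Order.TTheory GRing.Theory Num.Theory.
Local Open Scope classical_set_scope.
Local Open Scope ring_scope.

Section Defs.
Variable R : realType.

Definition C := complex R.
Definition cre (z : C) : R := complex.Re z.
Definition cim (z : C) : R := complex.Im z.
Definition csq (z : C) : R := cre z ^+ 2 + cim z ^+ 2.
Definition creal (a : R) : C := Complex a 0.
Definition cexpi (t : R) : C := Complex (cos t) (sin t).

(** Words omega_1 omega_2 ... are infinite binary sequences, indexed from 0:
    w 0 = omega_1, w 1 = omega_2, ... *)
Definition word := nat -> bool.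

Definition A0 : set word :=
  [set w | exists n : nat, forall k, (n <= k)%N -> w k = false].
Definition A1 : set word :=
  [set w | exists n : nat, forall k, (n <= k)%N -> w k = true].
Definition AZ : set word := A0 `|` A1.

(** An index n after which w is constant (w = w_0 ... w_{n-1} (w_n)^oo);
    chosen classically (0 if w is not eventually constant). *)
Definition tail_index (w : word) : nat :=
  xget 0%N [set n | forall k, (n <= k)%N -> w k = w n].

(** d_Z(w_1...w_n 0^oo) = sum_k w_k 2^(k-1),
    d_Z(w_1...w_n 1^oo) = sum_k w_k 2^(k-1) - 2^n *)
Definition dZ (w : word) : int :=
  let n := tail_index w in
  (\sum_(k < n) (w k)%:Z * 2 ^+ k) - (w n)%:Z * 2 ^+ n.

Definition r (x : R) : R := 2 * x - (Num.floor (2 * x))%:~R.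
Definition tau0 (x : R) : R := x / 2.
Definition tau1 (x : R) : R := (x + 1) / 2.
Definition omega_x (x : R) : bool := tau1 (r x) == x.
Definition wcons (b : bool) (w : word) : word :=
  fun k => if k is k'.+1 then w k' else b.
Definition rtilde (xw : R * word) : R * word :=
  (r xw.1, wcons (omega_x xw.1) xw.2).

Definition I01 : set R := `[0, 1[.

Definition sqnormR (f : R -> C) : \bar R :=
  (\int[lebesgue_measure]_x ((csq (f x))%:E))%E.
Definition L2R (f : R -> C) : Prop :=
  [/\ measurable_fun setT (cre \o f), measurable_fun setT (cim \o f)
    & (sqnormR f < +oo)%E].

(** L^2([0,1) x A_Z, lambda) with  int g dlambda = int_0^1 sum_{w in A_Z} g(x,w) dx.
    Functions on [0,1) x A_Z are represented as curried maps R -> word -> C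
    (only values on [0,1) x A_Z matter). Measurability w.r.t. the product of
    the Borel sigma-algebra on [0,1) and the discrete one on the countable
    set A_Z amounts to measurability of every slice. *)
Definition sqnormA (g : R -> word -> C) : \bar R :=
  (\int[lebesgue_measure]_(x in I01) (\esum_(w in AZ) (csq (g x w))%:E))%E.
Definition L2A (g : R -> word -> C) : Prop :=
  (forall w, AZ w -> measurable_fun I01 (cre \o g ^~ w)
                   /\ measurable_fun I01 (cim \o g ^~ w))
  /\ (sqnormA g < +oo)%E.

Definition Eop (f : R -> C) : R -> word -> C :=
  fun x w => f (x + (dZ w)%:~R).

Definition That (f : R -> C) : R -> C := fun xi => cexpi (2 * pi * xi) * f xi.
Definition Uhat (f : R -> C) : R -> C := fun xi => creal (Num.sqrt 2) * f (2 * xi).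
Definition Ttil (g : R -> word -> C) : R -> word -> C :=
  fun x w => cexpi (2 * pi * x) * g x w.
Definition Util (g : R -> word -> C) : R -> word -> C :=
  fun x w => creal (Num.sqrt 2) * g (rtilde (x, w)).1 (rtilde (x, w)).2.

End Defs.

(* Main.v *)
Require Import Defs.
From HB Require Import structures.
From mathcomp Require Import all_boot all_order all_algebra.
From mathcomp Require Import all_classical all_reals all_analysis.
From mathcomp Require Import complex.
From mathcomp Require Import measurable_realfun.
From mathcomp Require Import ring lra.
Set Implicit Arguments. Unset Strict Implicit. Unset Printing Implicit Defensive.
Import Order.TTheory GRing.Theory Num.Theory.
Local Open Scope classical_set_scope.
Local Open Scope ring_scope.
From mathcomp Require Import zify.
Section W.
Definition tlw (w : word) : word := fun k => w k.+1.
Definition valid (w : word) n := forall k, (n <= k)%N -> w k = w n.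
Definition dZf (w : word) n : int := (\sum_(k < n) (w k)%:Z * 2 ^+ k) - (w n)%:Z * 2 ^+ n.

Lemma AZ_valid w : AZ w -> exists n, valid w n.
Proof. by case=> -[n Hn]; exists n => k nk; rewrite (Hn k nk) (Hn n (leqnn n)). Qed.
Lemma valid_AZ w n : valid w n -> AZ w.
Proof. move=> Hn; case E: (w n); [right|left]; exists n => k /Hn ->; exact E. Qed.
Lemma valid_le w n m : valid w n -> (n <= m)%N -> valid w m.
Proof. by move=> Hn nm k mk; rewrite (Hn k (leq_trans nm mk)) (Hn m nm). Qed.
Lemma dZfS w n : valid w n -> dZf w n.+1 = dZf w n.
Proof.
move=> Hn; rewrite /dZf big_ord_recr /= (Hn n.+1 (leqnSn n)) exprS; ring.
Qed.
Lemma dZf_le w n m : valid w n -> (n <= m)%N -> dZf w m = dZf w n.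
Proof.
move=> Hn /subnKC <-; elim: (m - n)%N => [|k IH]; first by rewrite addn0.
by rewrite addnS dZfS ?IH //; apply: valid_le Hn _; exact: leq_addr.
Qed.
Lemma dZE w n : valid w n -> dZ w = dZf w n.
Proof.
move=> Hn.
have Ht : valid w (tail_index w).
  by apply: (@xgetPex _ 0%N [set n | forall k, (n <= k)%N -> w k = w n]); exists n.
rewrite /dZ -/(dZf w (tail_index w)).
by rewrite -(dZf_le Ht (leq_maxl _ n)) (dZf_le Hn (leq_maxr _ n)).
Qed.
Lemma valid_wcons b w n : valid w n -> valid (wcons b w) n.+1.
Proof. by move=> Hn [|k] //= /Hn. Qed.
Lemma dZf_wcons b w n : dZf (wcons b w) n.+1 = b%:Z + 2 * dZf w n.
Proof.
rewrite /dZf big_ord_recl /= expr0 mulr1 mulrBr mulr_sumr exprS.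
under eq_bigr do rewrite exprS.
rewrite /bump /=.
under [X in _ = _ + (X - _)]eq_bigr do rewrite mulrCA.
ring.
Qed.
Lemma dZ_wcons b w : AZ w -> dZ (wcons b w) = b%:Z + 2 * dZ w.
Proof.
move=> /AZ_valid [n Hn].
by rewrite (dZE Hn) (dZE (valid_wcons b Hn)) dZf_wcons.
Qed.
Lemma AZ_wcons b w : AZ w -> AZ (wcons b w).
Proof. by move=> /AZ_valid [n Hn]; apply: valid_AZ (valid_wcons b Hn). Qed.
Lemma AZ_tl w : AZ w -> AZ (tlw w).
Proof.
move=> /AZ_valid [n Hn]; apply: (@valid_AZ _ n) => k nk.
by rewrite /tlw (Hn k.+1 (leqW nk)) (Hn n.+1 (leqnSn n)).
Qed.
Lemma wcons_tl w : wcons (w 0%N) (tlw w) = w.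
Proof. by apply/funext => -[|k]. Qed.
Lemma dZ_split w : AZ w -> dZ w = (w 0%N)%:Z + 2 * dZ (tlw w).
Proof. by move=> Hw; rewrite -{1}(wcons_tl w) dZ_wcons //; apply: AZ_tl. Qed.
Lemma par (b c : bool) (x y : int) : b%:Z + 2 * x = c%:Z + 2 * y -> b = c /\ x = y.
Proof. by case: b; case: c => /= h; split => //; lia. Qed.
Lemma dZ_inj u v : AZ u -> AZ v -> dZ u = dZ v -> u = v.
Proof.
move=> Hu Hv h; apply/funext => k; elim: k u v Hu Hv h => [|k IH] u v Hu Hv h;
  rewrite (dZ_split Hu) (dZ_split Hv) in h; have [h1 h2] := par h => //.
exact: (IH (tlw u) (tlw v) (AZ_tl Hu) (AZ_tl Hv) h2).
Qed.
Lemma dZ_surj_nat m : (exists w, AZ w /\ dZ w = m%:Z) /\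
  (exists w, AZ w /\ dZ w = - (m.+1)%:Z).
Proof.
elim/ltn_ind: m => m IH; case: m IH => [|m] IH.
  split.
    exists (fun _ => false); split; first exact: (@valid_AZ _ 0%N).
    by rewrite (@dZE _ 0%N) // /dZf big_ord0.
  exists (fun _ => true); split; first exact: (@valid_AZ _ 0%N).
  by rewrite (@dZE _ 0%N) // /dZf big_ord0.
have E := odd_double_half m.+1.
have lt : (m.+1./2 < m.+1)%N by move: E; rewrite -addnn; lia.
have [[w1 [A1 d1]] [w2 [A2 d2]]] := IH _ lt.
split.
  exists (wcons (odd m.+1) w1); split; first exact: AZ_wcons.
  rewrite dZ_wcons // d1. rewrite -{3}E PoszD -muln2 PoszM. ring.
exists (wcons (~~ odd m.+1) w2); split; first exact: AZ_wcons.
rewrite dZ_wcons // d2 -{3}E.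
case: (odd m.+1) => /=; rewrite -muln2; lia.
Qed.
Lemma dZ_surj (n : int) : exists w, AZ w /\ dZ w = n.
Proof.
case: n => m; first by case: (dZ_surj_nat m).
by rewrite NegzE; case: (dZ_surj_nat m).
Qed.
Definition dinv (n : int) : word := xget (fun _ => false) [set w | AZ w /\ dZ w = n].
Lemma dinvP n : AZ (dinv n) /\ dZ (dinv n) = n.
Proof. have [w Hw] := dZ_surj n. rewrite /dinv. move: (Hw). set P := mkset _. move=> HP. have := @xgetI _ (fun _ : nat => false) P w HP. exact. Qed.
Lemma dinvK w : AZ w -> dinv (dZ w) = w.
Proof. by move=> Hw; have [A E] := dinvP (dZ w); apply: dZ_inj. Qed.

Definition en (k : nat) : int := if odd k then - (k./2.+1)%:Z else (k./2)%:Z.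
Lemma en_inj i j : en i = en j -> i = j.
Proof.
have Ei := odd_double_half i; have Ej := odd_double_half j.
rewrite /en; move: Ei Ej; case: (odd i); case: (odd j) => /= Ei Ej; rewrite -!addnn in Ei Ej; lia.
Qed.
Lemma en_surj (n : int) : exists k, en k = n.
Proof.
case: n => m.
  by exists m.*2; rewrite /en odd_double doubleK.
exists m.*2.+1; rewrite /en /= odd_double /= NegzE.
by rewrite uphalf_double.
Qed.
Definition pw (k : nat) : word := dinv (en k).
Lemma pw_bij : set_bij setT AZ pw.
Proof.
split.
- by move=> k _; case: (dinvP (en k)).
- move=> i j _ _ h; apply: en_inj.
  by have [_ <-] := dinvP (en i); rewrite -/(pw i) h; case: (dinvP (en j)).
- move=> w Hw; have [k Ek] := en_surj (dZ w); exists k => //.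
  by rewrite /pw Ek dinvK.
Qed.
Lemma dZ_pw k : dZ (pw k) = en k.
Proof. by case: (dinvP (en k)). Qed.
End W.
Section S.
Local Unset Implicit Arguments. Local Set Strict Implicit.
Variable R : realType.
Local Notation mu := (@lebesgue_measure R).

Lemma measurable_shift (a : R) : measurable_fun setT (fun x : R => x + a).
Proof. exact: measurable_funD. Qed.

Definition shm (a : R) : set (measurableTypeR R) -> \bar R := pushforward mu (fun x : measurableTypeR R => x + a).

Section sh.
Variable a : R.
Let ms := measurable_shift a.
Let shm0 : shm a set0 = 0%E.
Proof. by rewrite /shm /pushforward preimage_set0 measure0. Qed.
Let shm_ge0 A : (0 <= shm a A)%E.
Proof. exact: measure_ge0. Qed.
Let shm_sa : semi_sigma_additive (shm a).
Proof.
move=> F mF tF mUF; rewrite /shm /pushforward preimage_bigcup.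
apply: measure_semi_sigma_additive.
- by move=> n; have := ms measurableT _ (mF n); rewrite setTI.
- apply/trivIsetP => /= i j _ _ ij; rewrite -preimage_setI.
  move/trivIsetP : tF => /(_ i j I I ij) ->. by rewrite preimage_set0.
- by rewrite -preimage_bigcup; have := ms measurableT _ mUF; rewrite setTI.
Qed.
HB.instance Definition _ := isMeasure.Build _ _ _ (shm a) shm0 shm_ge0 shm_sa.
End sh.

Lemma push_shift a A : measurable A -> shm a A = mu A.
Proof.
move=> mA; apply/esym.
have := @lebesgue_measure_unique R (shm a). apply => //.
move=> _ [[x y] _ <-] /=.
rewrite /shm /pushforward.
have -> : (fun x0 : R => x0 + a) @^-1` `]x, y] = `]x - a, y - a]%classic.
  by apply/seteqP; split => z /=; rewrite !in_itv /= ?lerBrDr ?ltrBlDr.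
rewrite !lebesgue_measure_itv /= !lte_fin ltrD2r; case: ifP => // _.
by rewrite -EFinD; congr EFin; ring.
Qed.

Lemma integral_shift (a : R) (D : set R) (f : R -> \bar R) : measurable D ->
  measurable_fun D f -> (forall x, D x -> (0 <= f x)%E) ->
  (\int[mu]_(x in D) f x = \int[mu]_(x in (fun x : R => x + a)%R @^-1` D) f (x + a)%R)%E.
Proof.
move=> mD mf f0.
transitivity (\int[shm a]_(x in D) f x)%E.
  apply: eq_measure_integral => A mA _; exact: (esym (@push_shift a A mA)).
rewrite /shm ge0_integral_pushforward //; first exact: measurable_shift.
by move=> y; rewrite inE; apply: f0.
Qed.

Local Set Implicit Arguments. Local Unset Strict Implicit.
Lemma cos_sin_int (t : R) (n : int) :
  cos (t + 2 * pi * n%:~R) = cos t /\ sin (t + 2 * pi * n%:~R) = sin t.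
Proof.
have Hn m : forall u : R, cos (u + 2 * pi * m%:R) = cos u /\ sin (u + 2 * pi * m%:R) = sin u.
  elim: m => [|m IH] u; first by rewrite mulr0 addr0.
  have -> : u + 2 * pi * m.+1%:R = (u + 2 * pi * m%:R) + pi *+ 2.
    by rewrite mulrS; ring.
  by rewrite cosD2pi sinD2pi.
case: n => m; first exact: Hn.
rewrite NegzE.
set u := t + _.
have <- : u + 2 * pi * (m.+1)%:R = t by rewrite /u intrN; ring.
by have [-> ->] := Hn m.+1 u.
Qed.

Lemma cexpi_int (t : R) (n : int) : cexpi (2 * pi * (t + n%:~R)) = cexpi (2 * pi * t).
Proof.
have [hc hs] := cos_sin_int (2 * pi * t) n.
by rewrite /cexpi mulrDr hc hs.
Qed.

Lemma I01P (x : R) : I01 x <-> 0 <= x < 1.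
Proof. by rewrite /I01 /= in_itv. Qed.

Lemma floor2x (x : R) : I01 x -> Num.floor (2 * x) = (omega_x x)%:Z.
Proof.
move=> /I01P /andP [x0 x1].
rewrite /omega_x /tau1 /r.
have [h|h] := ltP x (2^-1).
  have F : Num.floor (2 * x) = 0.
    by apply: floor_def; rewrite add0r mulr0z mulr1z; apply/andP; split; lra.
  rewrite F mulr0z subr0.
  suff -> : ((2 * x + 1) / 2 == x) = false by [].
  by apply/negbTE/eqP => h'; lra.
have F : Num.floor (2 * x) = 1.
  by apply: floor_def; rewrite mulr1z; apply/andP; split; rewrite ?intrD /=; lra.
rewrite F.
suff -> : ((2 * x - 1%:~R + 1) / 2 == x) = true by [].
by apply/eqP; rewrite mulr1z; field.
Qed.

Lemma sqnormA0 (g : R -> word -> C R) :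
  (forall x w, I01 x -> AZ w -> g x w = 0) -> sqnormA g = 0%E.
Proof.
move=> g0; rewrite /sqnormA.
rewrite (@eq_integral _ _ _ (@lebesgue_measure R) (@I01 R) (cst 0%E)) ?integral0 //.
move=> x /[!inE] Ix /=; apply: esum1 => w Aw.
by rewrite g0 // /csq /cre /cim /= expr0n /= addr0.
Qed.
Definition J (k : nat) : set R := `[(en k)%:~R, (en k)%:~R + 1[%classic.

Lemma J_floor k t : J k t <-> Num.floor t = en k.
Proof.
have := floor_eq t (en k); rewrite intrD /= /J /= in_itv /= => E.
by split => [h|h]; [apply/eqP; rewrite E | rewrite -E h].
Qed.

Lemma J_triv : trivIset setT J.
Proof.
apply/trivIsetP => i j _ _ ij; apply/seteqP; split => // t [/J_floor a /J_floor b].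
by move: ij; rewrite (en_inj (etrans (esym a) b)) eqxx.
Qed.

Lemma J_cover : \bigcup_k J k = setT.
Proof.
apply/seteqP; split => // t _; have [k Ek] := en_surj (Num.floor t).
by exists k => //; apply/J_floor.
Qed.

Lemma J_shift k : (fun x : R => x + (en k)%:~R) @^-1` J k = @I01 R.
Proof.
apply/seteqP; split => x; rewrite /J /I01 /= !in_itv /= => /andP [a b];
  apply/andP; split; lra.
Qed.

Lemma isoA (f : R -> C R) : measurable_fun setT (@cre R \o f) ->
  measurable_fun setT (@cim R \o f) -> sqnormA (Eop f) = sqnormR f.
Proof.
move=> mre mim.
pose h := fun t => (csq (f t))%:E.
have mh : measurable_fun setT h.
  apply/measurable_EFinP; rewrite /csq; apply: measurable_funD;
    apply: measurable_funX; [exact: mre|exact: mim].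
have h0 t : (0 <= h t)%E by rewrite lee_fin /csq addr_ge0 // sqr_ge0.
rewrite /sqnormA /sqnormR.
transitivity (\int[lebesgue_measure]_(x in @I01 R) \sum_(k <oo) h (x + (en k)%:~R)%R)%E.
  apply: eq_integral => x _.
  rewrite nneseries_esumT // (@reindex_esum _ _ _ _ _ _ _ pw_bij).
  by apply: eq_esum => k _; rewrite /Eop dZ_pw.
etransitivity.
  apply: (@integral_nneseries _ _ _ _ _ _ (fun k (x : measurableTypeR R) => h (x + (en k)%:~R)%R)) => //.
  - exact: measurable_itv.
  - move=> k; apply: (measurable_funS measurableT) => //.
    exact: (measurableT_comp mh (measurable_shift _)).
transitivity (\sum_(k <oo) \int[lebesgue_measure]_(t in J k) h t)%E.
  apply: eq_eseriesr => k _.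
  rewrite (integral_shift (en k)%:~R) ?J_shift //.
  + exact: measurable_itv.
  + exact: (measurable_funS measurableT).
rewrite -ge0_integral_bigcup.
- by congr (integral _ _ _); exact: J_cover.
- by move=> k; exact: measurable_itv.
- exact: (measurable_funS measurableT).
- by [].
- exact: J_triv.
Qed.
Lemma floor_addint (x : R) (n : int) : I01 x -> Num.floor (x + n%:~R) = n.
Proof.
move=> /I01P /andP [x0 x1]; apply: floor_def; rewrite intrD; apply/andP; split; lra.
Qed.

Lemma Eop_meas (f : R -> C R) (w : word) : measurable_fun setT (@cre R \o f) ->
  measurable_fun (@I01 R) (@cre R \o (Eop f) ^~ w).
Proof.
move=> mf; apply: (measurable_funS measurableT) => //.
exact: (measurableT_comp mf (measurable_shift _)).
Qed.
Lemma Eop_meas' (f : R -> C R) (w : word) : measurable_fun setT (@cim R \o f) ->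
  measurable_fun (@I01 R) (@cim R \o (Eop f) ^~ w).
Proof.
move=> mf; apply: (measurable_funS measurableT) => //.
exact: (measurableT_comp mf (measurable_shift _)).
Qed.

Lemma Util_eq (f : R -> C R) x w : I01 x -> AZ w ->
  Eop (Uhat f) x w = Util (Eop f) x w.
Proof.
move=> Ix Aw; rewrite /Eop /Uhat /Util /rtilde /=.
congr (_ * f _).
rewrite dZ_wcons // /r floor2x // intrD intrM.
have -> : (2%:Z)%:~R = 2 :> R by [].
ring.
Qed.

Definition finv (g : R -> word -> C R) (t : R) : C R :=
  g (t - (Num.floor t)%:~R) (dinv (Num.floor t)).

Lemma finv_eq g x w : I01 x -> AZ w -> Eop (finv g) x w = g x w.
Proof.
move=> Ix Aw; rewrite /Eop /finv floor_addint // dinvK //.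
by congr g; ring.
Qed.

Lemma finv_meas (g : R -> word -> C R) (p : C R -> R) :
  (forall w, AZ w -> measurable_fun (@I01 R) (fun x => p (g x w))) ->
  measurable_fun setT (fun t => p (finv g t)).
Proof.
move=> mg.
suff : measurable_fun (\bigcup_k J k) (fun t => p (finv g t)) by rewrite J_cover.
apply/measurable_fun_bigcup => [k|k]; first exact: measurable_itv.
apply: (eq_measurable_fun (fun t : R => p (g (t - (en k)%:~R) (pw k)))) ; last first.
  apply: (measurable_comp (F := @I01 R) (f := fun x : R => p (g x (pw k)))).
- exact: measurable_itv.
- by move=> _ [t /= Jt <-]; rewrite -(J_shift k) /= subrK.
- by apply: mg; case: (dinvP (en k)).
- apply: (measurable_funS measurableT) => //; exact: measurable_shift.
move=> t /[!inE] /J_floor Ft; by rewrite /finv Ft.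
Qed.
End S.

Theorem proposition3p13 (R : realType) :
  [/\ (* E is linear *)
      (forall (a b : C R) (f g : R -> C R) (x : R) (w : word),
          Eop (fun t => a * f t + b * g t) x w = a * Eop f x w + b * Eop g x w),
      (* E maps L^2(R) into L^2(lambda) isometrically *)
      (forall f : R -> C R, L2R f -> L2A (Eop f) /\ sqnormA (Eop f) = sqnormR f),
      (* E is onto (up to lambda-null functions) *)
      (forall g : R -> word -> C R, L2A g ->
          exists f : R -> C R, L2R f /\ sqnormA (fun x w => Eop f x w - g x w) = 0%E),
      (* E That = Ttil E  on L^2(R) *)
      (forall f : R -> C R, L2R f ->
          sqnormA (fun x w => Eop (That f) x w - Ttil (Eop f) x w) = 0%E)
    & (* E Uhat = Util E  on L^2(R) *)
      (forall f : R -> C R, L2R f ->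
          sqnormA (fun x w => Eop (Uhat f) x w - Util (Eop f) x w) = 0%E)].
Proof.
split.
- by [].
- move=> f [mre mim fin]; have iso := isoA mre mim.
  split; last exact: iso.
  split; last by rewrite iso.
  by move=> w _; split; [exact: Eop_meas | exact: Eop_meas'].
- move=> g [mg fin]; exists (finv g).
  have e : sqnormA (Eop (finv g)) = sqnormA g.
    rewrite /sqnormA; apply: eq_integral => x /[!inE] Ix.
    by apply: eq_esum => w Aw; rewrite finv_eq.
  have m1 : measurable_fun setT (@cre R \o finv g).
    by apply: (finv_meas (p := @cre R)) => w Aw; exact: (mg w Aw).1.
  have m2 : measurable_fun setT (@cim R \o finv g).
    by apply: (finv_meas (p := @cim R)) => w Aw; exact: (mg w Aw).2.
  split; first by split => //; rewrite -(isoA m1 m2) e.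
  by apply: sqnormA0 => x w Ix Aw; rewrite finv_eq // subrr.
- move=> f _; apply: sqnormA0 => x w Ix Aw.
  by rewrite /Eop /That /Ttil cexpi_int subrr.
- move=> f _; apply: sqnormA0 => x w Ix Aw.
  by rewrite Util_eq // subrr.
Qed.
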